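(* Let $K$ be a virtual knot with classical crossing number $c(K)=n$, and suppose $K$ has a Gauss code $\omega_K$ (coming from a diagram of $K$ with $n$ classical crossings) with $M(\omega_K)=n$. Then $n=\tau(K)=\rho(K)$.
   Context: Mosaic tiles are the eleven standard unit-square tiles $T_0,\dots,T_{10}$ ($T_0$ blank; $T_1,\dots,T_8$ non-crossing tiles with one or two arcs; $T_9,T_{10}$ the two crossing tiles, each containing a horizontal and a vertical strand crossing at the center). A virtual rectangular mosaic is an $m\times n$ array of tiles together with a pairing of the $2(m+n)$ boundary unit edges whose quotient is a closed orientable surface carrying a knot diagram; it represents a virtual knot. A row mosaic is a $1\times n$ virtual rectangular mosaic. The tile number $\tau(K)$ is the minimal number of tiles of a virtual rectangular mosaic representing $K$; the row number $\rho(K)$ is the minimal $n$ such that $K$ is represented by a $1\times n$ row mosaic. The classical crossing number $c(K)$ is the minimal number of classical crossings in a virtual diagram of $K$. A Gauss code of a diagram with classical crossings labeled $1,\dots,n$ is the cyclic sequence of length $2n$ recording, while traversing the knot, each classical crossing passed (with over/under and sign information). $M(\omega_K)$ denotes the length of a longest consecutive subsequence of $\omega_K$ in which no crossing label appears twice. *)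

(* Defs.v *)
From Stdlib Require Import Relations.
From mathcomp Require Import all_boot.

Set Implicit Arguments.
Unset Strict Implicit.
Unset Printing Implicit Defensive.

(* An entry of a Gauss code: (crossing label, passes over?, sign),    *)
(* sign = true means a positive crossing.                             *)
Definition ent := (nat * bool * bool)%type.
Definition gcode := seq ent.

Definition lab (e : ent) : nat := e.1.1.
Definition ovr (e : ent) : bool := e.1.2.
Definition sgn (e : ent) : bool := e.2.
Definition labels (w : gcode) : seq nat := map lab w.

Definition gc_wf (w : gcode) : bool :=
  all (fun e => (count (fun e' => lab e' == lab e) w == 2) &&
                has (fun e' => [&& lab e' == lab e, ovr e' != ovr e & sgn e' == sgn e]) w) w.

(* Valid Reidemeister III configurations: strands Top (over at a, b), *)
(* Middle (under at a, over at c), Bottom (under at b, c).  The       *)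
(* booleans t, mm, bb record the order along each strand; realizability *)
(* by three lines in the plane forces the sign conditions below.      *)
Definition R3config (pT pM pB : gcode) : Prop :=
  exists (a b c : nat) (sa sb sc t mm bb : bool),
    [/\ uniq [:: a; b; c],
        pT = (if t then [:: (a, true, sa); (b, true, sb)]
                   else [:: (b, true, sb); (a, true, sa)]),
        pM = (if mm then [:: (a, false, sa); (c, true, sc)]
                    else [:: (c, true, sc); (a, false, sa)]),
        pB = (if bb then [:: (b, false, sb); (c, false, sc)]
                    else [:: (c, false, sc); (b, false, sb)]) &
        ((t == mm) = (sb == sc)) /\ ((t == bb) = (sa == sc))].

Inductive gmove : gcode -> gcode -> Prop :=
| GM_rot w : gmove w (rot 1 w)
| GM_relabel w (f : nat -> nat) : injective f ->
    gmove w (map (fun e => (f (lab e), ovr e, sgn e)) w)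
| GM_R1 x y a o s : a \notin labels (x ++ y) ->
    gmove (x ++ y) (x ++ [:: (a, o, s); (a, ~~ o, s)] ++ y)
| GM_R2 x y a b s (par : bool) : a != b ->
    a \notin labels (x ++ y) -> b \notin labels (x ++ y) ->
    gmove (x ++ y)
          (x ++ [:: (a, true, s); (b, true, ~~ s)] ++ y ++
             (if par then [:: (a, false, s); (b, false, ~~ s)]
                     else [:: (b, false, ~~ s); (a, false, s)]))
| GM_R3 x1 x2 x3 p1 p2 p3 pT pM pB :
    R3config pT pM pB -> perm_eq [:: p1; p2; p3] [:: pT; pM; pB] ->
    gmove (x1 ++ p1 ++ x2 ++ p2 ++ x3 ++ p3)
          (x1 ++ rev p1 ++ x2 ++ rev p2 ++ x3 ++ rev p3).

Definition gequiv : relation gcode := clos_refl_sym_trans gcode gmove.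

Definition Mw (w : gcode) : nat :=
  \max_(i < size w)
    \max_(k < (size w).+1 | uniq (labels (take k (drop i (w ++ w))))) k.

Definition side := 'I_4.
Definition sN : side := @Ordinal 4 0 isT.
Definition sE : side := @Ordinal 4 1 isT.
Definition sS : side := @Ordinal 4 2 isT.
Definition sW : side := @Ordinal 4 3 isT.

Definition tile := 'I_11.

(* partner side of side s through a strand of tile t (None: no connection point) *)
Definition conn_nat (t s : nat) : option nat :=
  match t, s with
  | 1, 0 => Some 3 | 1, 3 => Some 0          (* arc N-W *)
  | 2, 0 => Some 1 | 2, 1 => Some 0          (* arc N-E *)
  | 3, 1 => Some 2 | 3, 2 => Some 1          (* arc E-S *)
  | 4, 2 => Some 3 | 4, 3 => Some 2          (* arc S-W *)
  | 5, 1 => Some 3 | 5, 3 => Some 1          (* horizontal line *)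
  | 6, 0 => Some 2 | 6, 2 => Some 0          (* vertical line *)
  | 7, 0 => Some 3 | 7, 3 => Some 0 | 7, 1 => Some 2 | 7, 2 => Some 1
  | 8, 0 => Some 1 | 8, 1 => Some 0 | 8, 2 => Some 3 | 8, 3 => Some 2
  | 9, _ => Some ((s + 2) %% 4)      (* crossing, horizontal strand over *)
  | 10, _ => Some ((s + 2) %% 4)     (* crossing, vertical strand over *)
  | _, _ => None
  end.

Definition conn (t : tile) (s : side) : option side :=
  omap (@inord 3) (conn_nat t s).

Definition port (m n : nat) := ('I_m * 'I_n * side)%type.

(* an m x n array of tiles, with a pairing of boundary unit edges       *)
(* (only its values on boundary edges matter).                          *)
Record mosaic (m n : nat) := Mosaic {
  mtile : {ffun 'I_m * 'I_n -> tile};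
  mpair : port m n -> port m n }.

Section Mosaics.
Variables (m n : nat) (X : mosaic m n).

Definition boundary (p : port m n) : bool :=
  let: (i, j, s) := p in
  [|| (s == sN) && (i == 0 :> nat), (s == sS) && (i == m.-1 :> nat),
      (s == sW) && (j == 0 :> nat) | (s == sE) && (j == n.-1 :> nat)].

Definition neighbor (p : port m n) : port m n :=
  let: (i, j, s) := p in
  if s == sN then (insubd i i.-1, j, sS)
  else if s == sS then (insubd i i.+1, j, sN)
  else if s == sW then (i, insubd j j.-1, sE)
  else (i, insubd j j.+1, sW).

Definition nextp (p : port m n) : port m n :=
  if boundary p then mpair X p else neighbor p.

Definition tile_at (p : port m n) : tile := mtile X p.1.

Definition cp (p : port m n) : bool := conn (tile_at p) p.2 != None.

Definition partner (p : port m n) : port m n :=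
  (p.1, odflt p.2 (conn (tile_at p) p.2)).

Definition step (p : port m n) : port m n := nextp (partner p).

(* X is a virtual rectangular mosaic carrying a knot diagram (one component) *)
Definition is_vrm : Prop :=
  [/\ forall p, boundary p ->
        [/\ boundary (mpair X p), mpair X (mpair X p) = p & mpair X p != p],
      forall p, cp p = cp (nextp p) &
      exists p0, cp p0 /\
        forall q, cp q -> fconnect step p0 q \/ fconnect step p0 (partner q)].

Definition crossing_tile (p : port m n) : bool :=
  (val (tile_at p) == 9) || (val (tile_at p) == 10).

Definition lab_of (p : port m n) : nat := p.1.1 * n + p.1.2.

Definition ovr_of (p : port m n) : bool :=
  if val (tile_at p) == 9 then (p.2 == sE) || (p.2 == sW)
  else (p.2 == sN) || (p.2 == sS).

(* sign (positive iff det(dir over, dir under) > 0, with north = up) *)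
Definition sgn_of (q p : port m n) : bool :=
  let h := fconnect step q (p.1, sW) in  (* horizontal strand runs east *)
  let v := fconnect step q (p.1, sS) in  (* vertical strand runs north *)
  if val (tile_at p) == 9 then h == v else h != v.

Definition read_code (q : port m n) : gcode :=
  [seq (lab_of p, ovr_of p, sgn_of q p)
     | p <- traject step q (fingraph.order step q) & crossing_tile p].

Definition represents (K : gcode) : Prop :=
  exists q, cp q /\ gequiv (read_code q) K.

End Mosaics.

Definition least (P : nat -> Prop) (k : nat) : Prop :=
  P k /\ forall j, P j -> k <= j.

Definition crossing_number (K : gcode) (k : nat) : Prop :=
  least (fun k => exists w, [/\ gc_wf w, gequiv w K & size w = k.*2]) k.

Definition tile_number (K : gcode) (t : nat) : Prop :=
  least (fun t => exists (a b : nat) (X : mosaic a b),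
                    [/\ is_vrm X, represents X K & t = a * b]) t.

Definition row_number (K : gcode) (r : nat) : Prop :=
  least (fun r => exists X : mosaic 1 r, is_vrm X /\ represents X K) r.

(* Main.v *)
From Stdlib Require Import Relations.
Require Import Defs.
From mathcomp Require Import all_boot zify.

Set Implicit Arguments. Unset Strict Implicit.
Lemma conn_nat_inv (t s s' : nat) : s < 4 -> conn_nat t s = Some s' ->
  [/\ s' < 4, conn_nat t s' = Some s & s' != s].
Proof.
by do 11?[case: t => [|t]]; do 4?[case: s => [|s]] => //= _ [<-].
Qed.
Lemma conn_inv t s s' : conn t s = Some s' -> conn t s' = Some s /\ s' != s.
Proof.
rewrite /conn; case E: (conn_nat t s) => [x|] //= [<-].
have [x4 E2 ne] := @conn_nat_inv t s x (ltn_ord s) E.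
rewrite inordK // E2 /=; split; last by rewrite -val_eqE /= inordK.
by congr Some; apply: val_inj; rewrite /= inordK.
Qed.

Lemma insubdE m (i : 'I_m) k : k < m -> val (insubd i k) = k.
Proof. by move=> h; rewrite val_insubd h. Qed.
Lemma port_eq m n (p q : port m n) : val p.1.1 = val q.1.1 -> val p.1.2 = val q.1.2 -> val p.2 = val q.2 -> p = q.
Proof. by case: p q => [[i j] s] [[i' j'] s'] /= /val_inj-> /val_inj-> /val_inj->. Qed.
Lemma count_mem_sym (T : eqType) (s1 s2 : seq T) : uniq s1 -> uniq s2 ->
  count (mem s2) s1 = count (mem s1) s2.
Proof.
move=> u1 u2; rewrite -!size_filter; apply: perm_size.
apply: uniq_perm; rewrite ?filter_uniq // => x; rewrite !mem_filter andbC //.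
Qed.

Lemma side_odd (x : side) : ((x == sE) || (x == sW)) = odd x /\ ((x == sN) || (x == sS)) = ~~ odd x.
Proof. by case: x => [[|[|[|[|x]]]] Hx]. Qed.

Section Lower.
Variables (a b : nat) (X : mosaic a b).
Lemma neighbor_inv (p : port a b) : ~~ boundary p ->
  [/\ ~~ boundary (neighbor p), neighbor (neighbor p) = p & neighbor p != p].
Proof.
case: p => [[i j] [[|[|[|[|s]]]] Hs]] //=; rewrite /neighbor /= ?orbF;
  have := ltn_ord i; have := ltn_ord j; move=> lj li.
- move=> /eqP Hi0; have Hv : val (insubd i i.-1) = i.-1 by rewrite insubdE; lia.
  have Hv2 : val (insubd (insubd i i.-1) (insubd i i.-1).+1) = i.
    by rewrite Hv insubdE; lia.
  split; [|by apply: port_eq|by apply/eqP => -[]].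
  by rewrite Hv; apply/eqP; lia.
- move=> /eqP Hj0; have Hv : val (insubd j j.+1) = j.+1 by rewrite insubdE; lia.
  have Hv2 : val (insubd (insubd j j.+1) (insubd j j.+1).-1) = j.
    by rewrite Hv insubdE; lia.
  split; [|by apply: port_eq|by apply/eqP => -[]].
  by rewrite Hv.
- move=> /eqP Hi0; have Hv : val (insubd i i.+1) = i.+1 by rewrite insubdE; lia.
  have Hv2 : val (insubd (insubd i i.+1) (insubd i i.+1).-1) = i.
    by rewrite Hv insubdE; lia.
  split; [|by apply: port_eq|by apply/eqP => -[]].
  by rewrite Hv.
- move=> /eqP Hj0; have Hv : val (insubd j j.-1) = j.-1 by rewrite insubdE; lia.
  have Hv2 : val (insubd (insubd j j.-1) (insubd j j.-1).+1) = j.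
    by rewrite Hv insubdE; lia.
  split; [|by apply: port_eq|by apply/eqP => -[]].
  by rewrite Hv; apply/eqP; lia.
Qed.

Hypothesis HX : is_vrm X.

Lemma nextpK p : nextp X (nextp X p) = p /\ nextp X p != p.
Proof.
case: HX => Hb _ _; rewrite /nextp; case bp: (boundary p).
  by have [b1 b2 b3] := Hb p bp; rewrite b1 b2.
by have [n1 n2 n3] := neighbor_inv (negbT bp); rewrite (negbTE n1) n2.
Qed.

Lemma partnerK p : partner X (partner X p) = p.
Proof.
case: p => [ij s]; rewrite /partner /tile_at /=.
case E: (conn _ s) => [s'|] /=; last by rewrite E.
by have [-> _] := conn_inv E.
Qed.

Lemma cp_partner p : cp X (partner X p) = cp X p.
Proof.
case: p => [ij s]; rewrite /partner /cp /tile_at /=.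
case E: (conn _ s) => [s'|] /=; last by rewrite E.
by have [-> _] := conn_inv E.
Qed.

Lemma partner_neq p : cp X p -> partner X p != p.
Proof.
case: p => [ij s]; rewrite /partner /cp /tile_at /=.
case E: (conn _ s) => [s'|] //= _.
have [_ ne] := conn_inv E; apply/eqP => -[]; exact/eqP.
Qed.

Lemma step_inj : injective (step X).
Proof.
move=> x y; rewrite /step => /(congr1 (nextp X)).
by rewrite !(proj1 (nextpK _)) => /(congr1 (partner X)); rewrite !partnerK.
Qed.

Lemma cp_step p : cp X (step X p) = cp X p.
Proof. by case: HX => _ Hc _; rewrite /step -Hc cp_partner. Qed.

Lemma stepPS x : step X (partner X (step X x)) = partner X x.
Proof. by rewrite /step partnerK (proj1 (nextpK _)). Qed.

Lemma no_iter k y : cp X y -> partner X y != iter k (step X) y.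
Proof.
elim: k {-2}k (leqnn k) y => [|K IH] k hk y cy.
  have -> : k = 0 by lia.
  exact: partner_neq.
case: k hk => [|[|k]] hk.
- exact: partner_neq.
- by rewrite /= /step eq_sym; have [_ ->] := nextpK (partner X y).
- apply/eqP => E.
  have E2 : partner X (step X y) = iter k.+1 (step X) y.
    by apply: step_inj; rewrite stepPS E.
  have hk' : k <= K by lia.
  by have := IH k hk' (step X y); rewrite cp_step -iterSr E2 eqxx => /(_ cy).
Qed.

Lemma conn_partner x y : fconnect (step X) x y ->
  fconnect (step X) (partner X y) (partner X x).
Proof.
move=> /iter_findex <-; elim: (findex _ x y) => [|k IH] /=; first exact: connect0.
apply: connect_trans IH.
by have := fconnect1 (step X) (partner X (step X (iter k (step X) x))); rewrite stepPS.
Qed.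

Lemma symc x y : fconnect (step X) x y = fconnect (step X) y x.
Proof. exact: (fconnect_sym step_inj). Qed.

Lemma orbit_cover q x : cp X q -> cp X x ->
  fconnect (step X) q x || fconnect (step X) q (partner X x).
Proof.
case: HX => _ _ [p0 [cp0 H]] cq cx.
have [Hq|Hq] := H q cq.
- have Hq' : fconnect (step X) q p0 by rewrite symc.
  have [Hx|Hx] := H x cx.
  + by rewrite (connect_trans Hq' Hx).
  + by rewrite (connect_trans Hq' Hx) orbT.
- have Hq' : fconnect (step X) q (partner X p0).
    by have := conn_partner Hq; rewrite partnerK.
  have [Hx|Hx] := H x cx.
  + have := conn_partner Hx; rewrite symc => Hx'.
    by rewrite (connect_trans Hq' Hx') orbT.
  + have := conn_partner Hx; rewrite partnerK symc => Hx'.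
    by rewrite (connect_trans Hq' Hx').
Qed.

Lemma orbit_excl q x : cp X x ->
  ~~ (fconnect (step X) q x && fconnect (step X) q (partner X x)).
Proof.
move=> cx; apply/negP => /andP[h1 h2].
have h : fconnect (step X) x (partner X x) by rewrite symc in h1; exact: connect_trans h1 h2.
by have := no_iter (findex (step X) x (partner X x)) cx; rewrite iter_findex // eqxx.
Qed.


Lemma crossing_partner p : crossing_tile X p ->
  cp X p /\ partner X p = (p.1, inord ((p.2 + 2) %% 4)).
Proof.
rewrite /crossing_tile /partner /cp /conn; case/orP => /eqP ->; by [].
Qed.


Lemma lab_ofE (p p' : port a b) : (lab_of p' == lab_of p) = (p'.1 == p.1).
Proof.
rewrite /lab_of; case: p p' => [[i j] s] [[i' j'] s'] /=.
apply/eqP/eqP => [E|[-> ->]] //.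
have hj := ltn_ord j; have hj' := ltn_ord j'.
have b0 : 0 < b by lia.
have E1 := congr1 (modn^~ b) E; have E2 := congr1 (divn^~ b) E; move: E1 E2 => /=.
rewrite !modnMDl !modn_small // !divnMDl // !divn_small // !addn0 => /val_inj-> /val_inj-> //.
Qed.

Lemma crossing_same (p p' : port a b) : p'.1 = p.1 ->
  crossing_tile X p' = crossing_tile X p.
Proof. by rewrite /crossing_tile /tile_at => ->. Qed.

Lemma sgn_same q (p p' : port a b) : p'.1 = p.1 -> sgn_of X q p' = sgn_of X q p.
Proof. by rewrite /sgn_of /tile_at => ->. Qed.


Lemma ovr_odd p : ovr_of X p = if val (tile_at X p) == 9 then odd p.2 else ~~ odd p.2.
Proof. by rewrite /ovr_of; have [-> ->] := side_odd p.2. Qed.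

Lemma read_code_wf q : cp X q -> gc_wf (read_code X q).
Proof.
move=> cq.
set F := fun p => (lab_of p, ovr_of X p, sgn_of X q p).
have RC : read_code X q = map F [seq p <- orbit (step X) q | crossing_tile X p] by [].
rewrite /gc_wf RC; apply/allP => e /mapP [p]; rewrite mem_filter => /andP[crp pO] ->{e}.
set t := p.1.
have key : forall s : side, cp X (t, s) /\ partner X (t,s) = (t, inord ((s+2)%%4)).
  by move=> s0; apply: crossing_partner; rewrite (crossing_same (p:=p)).
have pairr : forall s s' : side, val s' = (s + 2) %% 4 ->
    fconnect (step X) q (t, s') = ~~ fconnect (step X) q (t, s).
  move=> s0 s' hs'; have [c1 P1] := key s0.
  have P1' : partner X (t, s0) = (t, s').
    by rewrite P1; congr pair; apply: val_inj; rewrite /= inordK ?hs' // ltn_mod.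
  have := orbit_cover cq c1; have := orbit_excl q c1; rewrite P1'.
  by case: (fconnect _ q (t, s')); case: (fconnect _ q (t, s0)).
have hE := pairr sW sE erefl.
have hS := pairr sN sS erefl.
set bN := fconnect (step X) q (t, sN) in hS *.
set bW := fconnect (step X) q (t, sW) in hE *.
have hN : fconnect (step X) q (t, sN) = bN by [].
have hW : fconnect (step X) q (t, sW) = bW by [].
clearbody bN bW.
have uO : uniq (orbit (step X) q) by exact: orbit_uniq.
apply/andP; split.
  rewrite count_map count_filter.
  rewrite (@eq_count _ _ (mem [:: (t, sN); (t, sE); (t, sS); (t, sW)])); last first.
    move=> p' /=; rewrite lab_ofE.
    case: p' => [t' s'] /=; rewrite !inE !xpair_eqE.
    case: (t' =P t) => [->|_]; last by [].
    rewrite /= (@crossing_same p (t, s')) // crp.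
    by case: s' => [[|[|[|[|s']]]] Hs].
  have oE : forall y, (y \in orbit (step X) q) = fconnect (step X) q y.
    by move=> y; rewrite fconnect_orbit.
  rewrite count_mem_sym //=; last by rewrite !inE !xpair_eqE !eqxx.
  rewrite !oE hE hS -/bN -/bW.
  by case: bN hN hS; case: bW hW hE => -> _ -> _.
apply/hasP.
pose xo := if odd p.2 then (if bN then (t, sN) else (t, sS))
           else (if bW then (t, sW) else (t, sE)).
have xo1 : xo.1 = t by rewrite /xo; case: ifP => _; case: ifP.
exists (F xo).
  apply: map_f; rewrite mem_filter (crossing_same (p:=p)) // crp -fconnect_orbit /=.
  by rewrite /xo; case: ifP => _; case: ifP => h; rewrite ?hN ?hS ?hW ?hE h.
rewrite /F /= (lab_ofE p xo) xo1 eqxx /= (sgn_same q (p:=p) (p':=xo)) // eqxx andbT.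
rewrite !ovr_odd /tile_at xo1.
by rewrite /xo; case: (odd p.2); case: ifP => _; case: (_ == 9).
Qed.

End Lower.

Lemma wf_size w : gc_wf w -> size w = (size (undup (labels w))).*2.
Proof.
move=> /allP wf.
rewrite -(size_map lab w) -/(labels w) -(perm_size (perm_count_undup (labels w))).
rewrite size_flatten /shape -map_comp.
rewrite (_ : map _ _ = map (fun _ => 2) (undup (labels w))); last first.
  apply/eq_in_map.
  move=> x; rewrite mem_undup => /mapP [e ew ->] /=; rewrite size_nseq.
  have /andP[/eqP c _] := wf e ew; by rewrite /labels count_map.
elim: (undup (labels w)) => //= x s ->; by rewrite doubleS.
Qed.

Lemma lower_bound (K : gcode) n a b (X : mosaic a b) :
  is_vrm X -> represents X K -> crossing_number K n -> n <= a * b.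
Proof.
move=> HX [q [cq eqv]] [_ Hmin].
have wf := read_code_wf HX cq.
apply: leq_trans (Hmin _ (ex_intro _ _ (And3 wf eqv (wf_size wf)))) _.
have -> : a * b = size (iota 0 (a * b)) by rewrite size_iota.
apply: uniq_leq_size; first exact: undup_uniq.
move=> x; rewrite mem_undup => /mapP [e /mapP [p _ ->] ->].
rewrite mem_iota /= /lab_of add0n.
case: p => [[i j] s] /=; apply: (@leq_trans (i.+1 * b)).
  by rewrite mulSn addnC ltn_add2r.
by rewrite leq_mul2r ltn_ord orbT.
Qed.

Set Implicit Arguments. Unset Strict Implicit.

Section Pairing.
Variables (T : eqType) (A B : seq T).
Hypotheses (uAB : uniq (A ++ B)) (sAB : size A = size B).
Definition pairf (p : T) : T :=
  if p \in A then nth p B (index p A) else if p \in B then nth p A (index p B) else p.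

Lemma pairf_A x k : k < size A -> pairf (nth x A k) = nth x B k.
Proof.
move=> hk; rewrite /pairf mem_nth // index_uniq //; last by move: uAB; rewrite cat_uniq => /andP[].
by apply: set_nth_default; rewrite -sAB.
Qed.

Lemma pairf_B x k : k < size B -> pairf (nth x B k) = nth x A k.
Proof.
move=> hk; move: uAB; rewrite cat_uniq => /and3P[uA dAB uB].
have nA : nth x B k \notin A.
  by apply: contra dAB => h; apply/hasP; exists (nth x B k) => //; apply: mem_nth.
rewrite /pairf (negbTE nA) mem_nth // index_uniq //.
by apply: set_nth_default; rewrite sAB.
Qed.

Lemma pairf_in p : p \in A ++ B ->
  [/\ pairf p \in A ++ B, pairf (pairf p) = p & pairf p != p].
Proof.
move: (uAB); rewrite cat_uniq => /and3P[uA dAB uB].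
rewrite mem_cat => /orP[] hp.
- have hk : index p A < size A by rewrite index_mem.
  rewrite -(nth_index p hp) pairf_A // pairf_B -?sAB // mem_cat mem_nth ?orbT -?sAB //.
  split=> //; apply/negP => /eqP E.
  have : nth p B (index p A) \in B by rewrite mem_nth // -sAB.
  rewrite E => hB; move: dAB => /hasP; apply; exists (nth p A (index p A)) => //.
  exact: mem_nth.
- have hk : index p B < size B by rewrite index_mem.
  rewrite -(nth_index p hp) pairf_B // pairf_A ?sAB // mem_cat mem_nth ?sAB //.
  split=> //; apply/negP => /eqP E.
  have : nth p A (index p B) \in A by rewrite mem_nth // sAB.
  rewrite E => hA; move: dAB => /hasP; apply; exists (nth p B (index p B)) => //.
  exact: mem_nth.
Qed.
End Pairing.

Lemma inj_ext (s1 s2 : seq nat) : uniq s1 -> uniq s2 -> size s1 = size s2 ->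
  exists f : nat -> nat, injective f /\ forall k, k < size s1 -> f (nth 0 s1 k) = nth 0 s2 k.
Proof.
move=> u1 u2 sz.
set U := undup (s1 ++ s2).
set L1 := s1 ++ [seq x <- U | x \notin s1].
set L2 := s2 ++ [seq x <- U | x \notin s2].
have uL1 : uniq L1 by rewrite cat_uniq u1 filter_uniq ?undup_uniq //= andbT; apply/hasPn => x; rewrite mem_filter => /andP[].
have uL2 : uniq L2 by rewrite cat_uniq u2 filter_uniq ?undup_uniq //= andbT; apply/hasPn => x; rewrite mem_filter => /andP[].
have mL : L1 =i L2.
  move=> x; rewrite !mem_cat !mem_filter mem_undup mem_cat.
  by case: (x \in s1); case: (x \in s2).
have szL : size L1 = size L2 by apply: perm_size; apply: uniq_perm.
exists (fun x => if x \in L1 then nth 0 L2 (index x L1) else x); split.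
  move=> x y /=; case hx: (x \in L1); case hy: (y \in L1).
  - have ix : index x L1 < size L2 by rewrite -szL index_mem.
    have iy : index y L1 < size L2 by rewrite -szL index_mem.
    move/eqP; rewrite nth_uniq // => /eqP E.
    by rewrite -(nth_index 0 hx) E nth_index.
  - move=> E; move: hy; rewrite -E mL mem_nth //.
    by rewrite -szL index_mem.
  - move=> E; move: hx; rewrite E mL mem_nth //.
    by rewrite -szL index_mem.
  - by [].
move=> k hk /=.
have hm : nth 0 L1 k \in L1 by rewrite mem_nth // /L1 size_cat (leq_trans hk) // leq_addr.
have -> : nth 0 s1 k = nth 0 L1 k by rewrite nth_cat hk.
rewrite hm index_uniq //; last by rewrite /L1 size_cat (leq_trans hk) // leq_addr.
by rewrite nth_cat -sz hk.
Qed.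

Set Implicit Arguments. Unset Strict Implicit.

Lemma insubdN m (i : 'I_m) k : k < m -> (insubd i k : nat) = k.
Proof. by move=> h; rewrite val_insubd h. Qed.

Definition e0 : ent := (0, false, false).

Section Upper.
Variables (n' : nat) (h v : gcode).
Local Notation N := n'.+1.
Hypotheses (hh : size h = N) (hv : size v = N) (uh : uniq (labels h))
  (uv : uniq (labels v)) (mhv : labels h =i labels v)
  (hvd : forall d, d \in v -> ovr d = ~~ ovr (nth e0 h (index (lab d) (labels h))) /\
                              sgn d = sgn (nth e0 h (index (lab d) (labels h)))).

Definition eh j := nth e0 h j.
Definition tj k := index (lab (nth e0 v k)) (labels h).

Lemma szlh : size (labels h) = N. Proof. by rewrite size_map. Qed.
Lemma szlv : size (labels v) = N. Proof. by rewrite size_map. Qed.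

Lemma labv k : k < N -> lab (nth e0 v k) = nth 0 (labels v) k.
Proof. by move=> hk; rewrite (nth_map e0) ?hv. Qed.
Lemma labh k : k < N -> lab (eh k) = nth 0 (labels h) k.
Proof. by move=> hk; rewrite (nth_map e0) ?hh. Qed.

Lemma tj_lt k : k < N -> tj k < N.
Proof.
move=> hk; rewrite /tj -szlh index_mem mhv labv //; apply: mem_nth; by rewrite szlv.
Qed.

Lemma tj_inj k1 k2 : k1 < N -> k2 < N -> tj k1 = tj k2 -> k1 = k2.
Proof.
move=> h1 h2; rewrite /tj => /index_inj E.
have E' : nth 0 (labels v) k1 = nth 0 (labels v) k2.
  have m1 : lab (nth e0 v k1) \in labels h by rewrite mhv labv ?mem_nth ?szlv.
  have m2 : lab (nth e0 v k2) \in labels h by rewrite mhv labv ?mem_nth ?szlv.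
  by rewrite -!labv //; apply: E.
by apply/eqP; rewrite -(nth_uniq 0 _ _ uv) ?szlv // E'.
Qed.

Lemma tj_surj j : j < N -> exists2 k, k < N & tj k = j.
Proof.
move=> hj; have hm : nth 0 (labels h) j \in labels v by rewrite -mhv mem_nth ?szlh.
exists (index (nth 0 (labels h) j) (labels v)); first by rewrite -szlv index_mem.
by rewrite /tj labv ?nth_index ?index_uniq ?szlh // -szlv index_mem.
Qed.

Definition north j := sgn (eh j) == ovr (eh j).
Definition Wp j : port 1 N := (ord0, inord j, sW).
Definition inp k : port 1 N := (ord0, inord (tj k), if north (tj k) then sS else sN).
Definition outp k : port 1 N := (ord0, inord (tj k), if north (tj k) then sN else sS).
Definition Ep : port 1 N := (ord0, ord_max, sE).
Definition Al := Ep :: map outp (iota 0 N).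
Definition Bl := rcons (map inp (iota 0 N)) (Wp 0).
Definition mt : {ffun 'I_1 * 'I_N -> tile} :=
  [ffun ij : 'I_1 * 'I_N => if ovr (eh ij.2) then (inord 9 : tile) else inord 10].
Definition Xm := Mosaic mt (pairf Al Bl).
Definition Tl := map Wp (iota 0 N) ++ map inp (iota 0 N).


Lemma eq_port (p q : port 1 N) : (p == q) = (val p.1.2 == val q.1.2) && (val p.2 == val q.2).
Proof.
case: p q => [[i j] s] [[i' j'] s'] /=.
rewrite (ord1 i) (ord1 i').
by apply/eqP/andP => [[-> ->]|[/eqP/val_inj-> /eqP/val_inj->]].
Qed.

Lemma vj_inp k : k < N -> val (inp k).1.2 = tj k.
Proof. by move=> hk; rewrite /= inordK // tj_lt. Qed.
Lemma vj_outp k : k < N -> val (outp k).1.2 = tj k.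
Proof. by move=> hk; rewrite /= inordK // tj_lt. Qed.
Lemma vj_Wp j : j < N -> val (Wp j).1.2 = j.
Proof. by move=> hk; rewrite /= inordK. Qed.

Lemma side_inp k : val (inp k).2 = if north (tj k) then 2 else 0.
Proof. by rewrite /=; case: north. Qed.
Lemma side_outp k : val (outp k).2 = if north (tj k) then 0 else 2.
Proof. by rewrite /=; case: north. Qed.


Lemma memI k : (k \in iota 0 N) = (k < N).
Proof. by rewrite mem_iota. Qed.

Lemma mem_AB p : (p \in Al ++ Bl) = [|| val p.2 == 0, val p.2 == 2, p == Ep | p == Wp 0].
Proof.
rewrite mem_cat /Al /Bl inE mem_rcons inE -orbA.
apply/idP/idP.
- case/or4P => [->|/mapP[k _ ->]|->|/mapP[k _ ->]]; rewrite ?orbT //.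
  + by rewrite side_outp; case: north.
  + by rewrite side_inp; case: north.
- case/or4P => [s0|s2|->|->]; rewrite ?orbT //.
  + have [k hk tk] := tj_surj (ltn_ord p.1.2).
    case hn: (north p.1.2).
    * apply/or4P; apply: Or42; apply/mapP; exists k; rewrite ?memI //.
      by apply/eqP; rewrite eq_port vj_outp // side_outp tk hn eqxx.
    * apply/or4P; apply: Or44; apply/mapP; exists k; rewrite ?memI //.
      by apply/eqP; rewrite eq_port vj_inp // side_inp tk hn eqxx.
  + have [k hk tk] := tj_surj (ltn_ord p.1.2).
    case hn: (north p.1.2).
    * apply/or4P; apply: Or44; apply/mapP; exists k; rewrite ?memI //.
      by apply/eqP; rewrite eq_port vj_inp // side_inp tk hn eqxx.
    * apply/or4P; apply: Or42; apply/mapP; exists k; rewrite ?memI //.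
      by apply/eqP; rewrite eq_port vj_outp // side_outp tk hn eqxx.
Qed.

Lemma uniq_AB : uniq (Al ++ Bl).
Proof.
have ninj f : (forall k, k < N -> val (f k : port 1 N).1.2 = tj k) ->
    uniq (map f (iota 0 N)).
  move=> hf; rewrite map_inj_in_uniq ?iota_uniq // => k1 k2; rewrite !memI => h1 h2 E.
  by apply: tj_inj => //; rewrite -hf // -[RHS]hf // E.
rewrite cat_uniq /Al /Bl cons_uniq rcons_uniq (ninj outp) ?(ninj inp) ?andbT; try exact: vj_outp; try exact: vj_inp.
apply/and3P; split.
- apply/negP => /mapP [k _ /eqP]; rewrite eq_port side_outp; by case: north; rewrite andbF.
- apply/hasPn => x; rewrite mem_rcons in_cons => /orP[/eqP->|/mapP[k hk ->]].
  + rewrite in_cons eq_port negb_or; apply/andP; split; first by rewrite /= andbF.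
    apply/negP => /mapP [k _ /eqP].
    by rewrite eq_port side_outp; case: north; rewrite andbF.
  + rewrite memI in hk; rewrite in_cons eq_port side_inp negb_or.
    apply/andP; split; first by rewrite /=; case: north; rewrite andbF.
    apply/negP => /mapP [k' hk' /eqP]; rewrite memI in hk'.
    rewrite eq_port vj_inp // vj_outp // side_inp side_outp.
    case: (tj k =P tj k') => [E|] //=; have := tj_inj hk hk' E => <-.
    by case: north.
- apply/negP => /mapP [k _ /eqP]; rewrite eq_port side_inp; by case: north; rewrite andbF.
Qed.
Lemma bnd_Xm (p : port 1 N) : boundary p = (p \in Al ++ Bl).
Proof.
rewrite mem_AB !eq_port /= inordK //.
case: p => [[i j] [[|[|[|[|s]]]] Hs]] //=; rewrite ?andbT ?andbF ?orbF //.
- by case: i => [[]].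
- by case: i => [[]].
Qed.

Lemma cross_Xm p : crossing_tile Xm p.
Proof. by rewrite /crossing_tile /tile_at /= ffunE; case: ifP => _; rewrite inordK. Qed.

Lemma partner_Xm p : partner Xm p = (p.1, inord ((p.2 + 2) %% 4)).
Proof. exact: (crossing_partner (cross_Xm p)).2. Qed.

Lemma cp_Xm p : cp Xm p.
Proof. exact: (crossing_partner (cross_Xm p)).1. Qed.
Lemma szAB : size Al = size Bl.
Proof. by rewrite /Al /Bl size_rcons /= !size_map. Qed.

Lemma pairfA x k : k < size Al -> pairf Al Bl (nth x Al k) = nth x Bl k.
Proof. exact: (pairf_A uniq_AB szAB). Qed.

Lemma nthBl x k : k < N -> nth x Bl k = inp k.
Proof. by move=> hk; rewrite /Bl nth_rcons size_map size_iota hk (nth_map 0) ?size_iota // nth_iota. Qed.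
Lemma nthBlN x : nth x Bl N = Wp 0.
Proof. by rewrite /Bl nth_rcons size_map size_iota ltnn eqxx. Qed.
Lemma nthAl x k : k < N -> nth x Al k.+1 = outp k.
Proof.
move=> hk; have -> : nth x Al k.+1 = nth x (map outp (iota 0 N)) k by [].
by rewrite (nth_map 0) ?size_iota // nth_iota.
Qed.

Lemma nextp_bnd p : p \in Al ++ Bl -> nextp Xm p = pairf Al Bl p.
Proof. by rewrite /nextp -bnd_Xm => ->. Qed.

Lemma step_W j : j < n' -> step Xm (Wp j) = Wp j.+1.
Proof.
move=> hj; rewrite /step partner_Xm.
have -> : ((Wp j).1, inord (((Wp j).2 + 2) %% 4)) = (ord0, inord j, sE) :> port 1 N.
  by apply/eqP; rewrite eq_port /= eqxx inordK.
have ij : (inord j : 'I_N) = j :> nat by rewrite inordK //; lia.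
rewrite /nextp bnd_Xm mem_AB !eq_port /= ij andbF orbF.
have -> : (j == n') = false by apply/eqP; lia.
rewrite /neighbor /=; apply/eqP; rewrite eq_port /= insubdN ?inordK ?eqxx //; lia.
Qed.

Lemma step_Wlast : step Xm (Wp n') = inp 0.
Proof.
rewrite /step partner_Xm.
have -> : ((Wp n').1, inord (((Wp n').2 + 2) %% 4)) = nth Ep Al 0.
  by apply/eqP; rewrite eq_port /= inordK // eqxx inordK.
have hA : 0 < size Al by [].
rewrite nextp_bnd ?mem_cat ?mem_nth // pairfA // nthBl //.
Qed.

Lemma step_inp k : k < N -> step Xm (inp k) = nth (Wp 0) Bl k.+1.
Proof.
move=> hk; rewrite /step partner_Xm.
have -> : ((inp k).1, inord (((inp k).2 + 2) %% 4)) = nth Ep Al k.+1.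
  rewrite nthAl //; apply/eqP; rewrite eq_port /inp /outp /=.
  by case: (north (tj k)); rewrite eqxx inordK.
have hA : k.+1 < size Al by rewrite /Al /= size_map size_iota.
rewrite nextp_bnd ?mem_cat ?mem_nth // pairfA //.
by apply: set_nth_default; rewrite -szAB.
Qed.
Definition Tnth k : port 1 N := if k < N then Wp k else inp (k - N).

Lemma nthT k : k < N.*2 -> nth (Wp 0) Tl k = Tnth k.
Proof.
move=> hk; rewrite /Tl /Tnth nth_cat size_map size_iota.
case: ifP => hk1; first by rewrite (nth_map 0) ?size_iota // nth_iota.
by rewrite (nth_map 0) ?size_iota ?nth_iota //; lia.
Qed.

Lemma iterT k : k < N.*2 -> iter k (step Xm) (Wp 0) = Tnth k.
Proof.
elim: k => [|k IH] hk; first by [].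
rewrite iterS IH; last by lia.
rewrite /Tnth.
case: (ltnP k.+1 N) => h1.
  by rewrite (ltnW h1) step_W.
case: (ltnP k N) => h2.
  have -> : k = n' by lia.
  by rewrite step_Wlast subnn.
rewrite step_inp; last by lia.
by rewrite nthBl ?subSn //; lia.
Qed.

Lemma iterT2 : iter N.*2 (step Xm) (Wp 0) = Wp 0.
Proof.
have -> : N.*2 = (n' + N).+1 by lia.
rewrite iterS iterT; last by lia.
rewrite /Tnth ltnNge leq_addl /= addnK step_inp // nthBlN //.
Qed.

Lemma uniqT : uniq Tl.
Proof.
rewrite /Tl cat_uniq; apply/and3P; split.
- rewrite map_inj_in_uniq ?iota_uniq // => j1 j2; rewrite !memI => h1 h2 E.
  by rewrite -(vj_Wp h1) -(vj_Wp h2) E.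
- apply/hasPn => x /mapP[k _ ->]; apply/negP => /mapP[j _ /eqP].
  by rewrite eq_port side_inp; case: north; rewrite andbF.
- rewrite map_inj_in_uniq ?iota_uniq // => j1 j2; rewrite !memI => h1 h2 E.
  by apply: tj_inj => //; rewrite -(vj_inp h1) -(vj_inp h2) E.
Qed.

Lemma TlE : Tl = traject (step Xm) (Wp 0) N.*2.
Proof.
apply: (@eq_from_nth _ (Wp 0)); first by rewrite size_traject /Tl size_cat !size_map size_iota; lia.
move=> k; rewrite /Tl size_cat !size_map size_iota => hk.
rewrite nth_traject; last by lia.
by rewrite -/Tl nthT ?iterT //; lia.
Qed.

Lemma cycT : fcycle (step Xm) Tl.
Proof.
rewrite TlE; have E : N.*2 = (N.*2.-1).+1 by lia.
move: iterT2; rewrite E; move: (N.*2.-1) => m H.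
rewrite trajectS /=.
have -> : rcons (traject (step Xm) (step Xm (Wp 0)) m) (Wp 0) =
          traject (step Xm) (step Xm (Wp 0)) m.+1 by rewrite trajectSr -iterSr H.
exact: fpath_traject.
Qed.

Lemma orbitT : orbit (step Xm) (Wp 0) = Tl.
Proof.
have hW : Wp 0 \in Tl by rewrite /Tl mem_cat; apply/orP; left; apply/mapP; exists 0; rewrite ?memI.
rewrite (orbitE cycT uniqT hW).
have -> : index (Wp 0) Tl = 0 by rewrite /Tl /= eqxx.
exact: rot0.
Qed.
Lemma inT_W (t : 'I_1 * 'I_N) : (t, sW) \in Tl.
Proof.
rewrite /Tl mem_cat; apply/orP; left; apply/mapP; exists (val t.2); first by rewrite memI ltn_ord.
by apply/eqP; rewrite eq_port vj_Wp ?ltn_ord // eqxx.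
Qed.

Lemma inT_S (t : 'I_1 * 'I_N) : ((t, sS) \in Tl) = north t.2.
Proof.
rewrite /Tl mem_cat; apply/idP/idP.
- case/orP => /mapP [k hk /eqP]; rewrite eq_port /=.
  + by rewrite andbF.
  + rewrite memI in hk; rewrite inordK ?tj_lt // /inp /=.
    by case: (nat_of_ord t.2 =P tj k) => // ->; case: (north (tj k)).
- move=> hn; apply/orP; right; have [k hk tk] := tj_surj (ltn_ord t.2).
  apply/mapP; exists k; rewrite ?memI //.
  by apply/eqP; rewrite eq_port vj_inp // side_inp tk hn eqxx.
Qed.

Lemma tileXm (t : 'I_1 * 'I_N) : (val (mtile Xm t) == 9) = ovr (eh t.2).
Proof. by rewrite /= ffunE; case: ifP => _; rewrite inordK. Qed.

Lemma sgnXm p : sgn_of Xm (Wp 0) p = sgn (eh p.1.2).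
Proof.
rewrite /sgn_of /tile_at tileXm !fconnect_orbit orbitT inT_W inT_S /north.
by case: (ovr _); case: (sgn _).
Qed.

Lemma F_W j : j < N -> (lab_of (Wp j), ovr_of Xm (Wp j), sgn_of Xm (Wp 0) (Wp j)) =
   (j, ovr (eh j), sgn (eh j)).
Proof.
move=> hj; rewrite sgnXm /lab_of /ovr_of /tile_at tileXm /= !inordK //.
by case: (ovr _).
Qed.

Lemma F_inp k : k < N -> (lab_of (inp k), ovr_of Xm (inp k), sgn_of Xm (Wp 0) (inp k)) =
   (tj k, ~~ ovr (eh (tj k)), sgn (eh (tj k))).
Proof.
move=> hk; rewrite sgnXm /lab_of /ovr_of /tile_at tileXm /= !inordK ?tj_lt //.
by case: (ovr _); case: (north _).
Qed.

Lemma rc_Xm : read_code Xm (Wp 0) =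
  map (fun e => (index (lab e) (labels h), ovr e, sgn e)) (h ++ v).
Proof.
rewrite /read_code -/(orbit (step Xm) (Wp 0)) orbitT.
rewrite (eq_in_filter (a2 := predT)); last by move=> x _; rewrite cross_Xm.
rewrite filter_predT /Tl map_cat.
set G := fun e : ent => _.
have Eh : h = map eh (iota 0 N) by rewrite -hh; exact: (esym (mkseq_nth e0 h)).
have Ev : v = map (nth e0 v) (iota 0 N) by rewrite -hv; exact: (esym (mkseq_nth e0 v)).
rewrite map_cat [in RHS]Ev [in RHS]Eh -!map_comp.
congr (_ ++ _); apply/eq_in_map => k; rewrite memI => hk /=.
- rewrite F_W // /G labh // index_uniq ?szlh //.
- have hk' : k < size v by rewrite hv.
  rewrite F_inp // /G; have [o s] := hvd (mem_nth e0 hk').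
  by rewrite o s.
Qed.
Lemma inT_N (t : 'I_1 * 'I_N) : ((t, sN) \in Tl) = ~~ north t.2.
Proof.
rewrite /Tl mem_cat; apply/idP/idP.
- case/orP => /mapP [k hk /eqP]; rewrite eq_port /=.
  + by rewrite andbF.
  + rewrite memI in hk; rewrite inordK ?tj_lt // /inp /=.
    by case: (nat_of_ord t.2 =P tj k) => // ->; case: (north (tj k)).
- move=> hn; apply/orP; right; have [k hk tk] := tj_surj (ltn_ord t.2).
  apply/mapP; exists k; rewrite ?memI //.
  by apply/eqP; rewrite eq_port vj_inp // side_inp tk (negbTE hn) eqxx.
Qed.

Lemma vrm_Xm : is_vrm Xm.
Proof.
split.
- move=> p; rewrite bnd_Xm => bp.
  have [a1 a2 a3] := pairf_in uniq_AB szAB bp.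
  by split; rewrite ?bnd_Xm.
- by move=> p; rewrite !cp_Xm.
exists (Wp 0); split; first exact: cp_Xm.
move=> q _; rewrite !fconnect_orbit orbitT partner_Xm.
case: q => [t [[|[|[|[|s]]]] Hs]] //=.
- have -> : Ordinal Hs = sN by apply: val_inj.
  have -> : (inord ((0 + 2) %% 4) : side) = sS by apply: val_inj; rewrite /= inordK.
  by case hn: (north t.2); [right|left]; rewrite ?inT_N ?inT_S hn.
- have -> : (inord ((1 + 2) %% 4) : side) = sW by apply: val_inj; rewrite /= inordK.
  by right; rewrite inT_W.
- have -> : Ordinal Hs = sS by apply: val_inj.
  have -> : (inord ((2 + 2) %% 4) : side) = sN by apply: val_inj; rewrite /= inordK.
  by case hn: (north t.2); [left|right]; rewrite ?inT_N ?inT_S hn.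
- have -> : Ordinal Hs = sW by apply: val_inj.
  by left; rewrite inT_W.
Qed.
End Upper.

Set Implicit Arguments. Unset Strict Implicit.

Lemma uniq_map_inj (T1 T2 : eqType) (f : T1 -> T2) s :
  uniq (map f s) -> {in s &, injective f}.
Proof.
elim: s => [|a s IH] //= /andP[na u] x y; rewrite !inE.
case/orP => [/eqP->|xs]; case/orP => [/eqP->|ys] // E.
- by move: na; rewrite E map_f.
- by move: na; rewrite -E map_f.
- exact: IH.
Qed.

Lemma gequiv_rot (w : gcode) i : i <= size w -> gequiv w (rot i w).
Proof.
elim: i => [|i IH] hi; first by rewrite rot0; apply: rst_refl.
apply: rst_trans (IH (ltnW hi)) _.
rewrite -add1n rotD //; apply: rst_step; exact: GM_rot.
Qed.

Lemma wf_rot (w : gcode) i : gc_wf w -> gc_wf (rot i w).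
Proof.
have P : perm_eq (rot i w) w by rewrite perm_rot.
rewrite /gc_wf (perm_all _ P) => /allP H; apply/allP => e he.
by rewrite ((permP P) _) (perm_has _ P) H.
Qed.

Lemma take_rot (w : gcode) i k : i < size w -> k <= size w ->
  take k (drop i (w ++ w)) = take k (rot i w).
Proof.
move=> hi hk; rewrite drop_cat hi /rot !take_cat size_drop.
case: ifP => // hk2; rewrite take_takel //; lia.
Qed.

Lemma construct (omega : gcode) n' : gc_wf omega -> size omega = (n'.+1).*2 ->
  Mw omega = n'.+1 ->
  exists X : mosaic 1 n'.+1, is_vrm X /\ exists q, cp X q /\ gequiv omega (read_code X q).
Proof.
set N := n'.+1 => wfo szo.
rewrite /Mw.
have c1 : 0 < #|'I_(size omega)| by rewrite card_ord szo; lia.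
have [i0 ->] := eq_bigmax (fun i : 'I_(size omega) =>
   \max_(k < (size omega).+1 | uniq (labels (take k (drop i (omega ++ omega))))) k) c1.
have c2 : 0 < #|[pred k : 'I_(size omega).+1 | uniq (labels (take k (drop i0 (omega ++ omega))))]|.
  by apply/card_gt0P; exists ord0; rewrite inE take0.
have [k0] := eq_bigmax_cond (fun k : 'I_(size omega).+1 => nat_of_ord k) c2.
rewrite inE => uk0 -> ek0; rewrite ek0 in uk0.
have hi : i0 < size omega by [].
rewrite take_rot // in uk0; last by rewrite szo; lia.
set w := rot i0 omega in uk0.
have wfw : gc_wf w by exact: wf_rot.
have szw : size w = N.*2 by rewrite size_rot.
set h := take N w in uk0; set v := drop N w.
have ew : w = h ++ v by rewrite cat_take_drop.
have hh : size h = N by rewrite size_take szw; case: ifP => //; lia.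
have hv : size v = N by rewrite size_drop szw; lia.
have uh := uk0.
have /allP wfa := wfw.
have sub : {subset labels h <= labels v}.
  move=> l /mapP [e eh ->].
  have ew' : e \in w by rewrite ew mem_cat eh.
  have /andP[/eqP c _] := wfa e ew'.
  move: c; rewrite ew count_cat.
  have -> : count (fun e' => lab e' == lab e) h = 1.
    by rewrite -(count_map lab (pred1 (lab e))) count_uniq_mem // map_f.
  move=> c; have : 0 < count (fun e' => lab e' == lab e) v by lia.
  rewrite -has_count => /hasP [e' e'v /eqP <-]; exact: map_f.
have szl : size (labels v) <= size (labels h) by rewrite !size_map hh hv.
have [_ mhv] := uniq_min_size uh sub szl.
have uv := leq_size_uniq uh sub szl.
have hvd : forall d, d \in v -> ovr d = ~~ ovr (nth e0 h (index (lab d) (labels h))) /\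
                              sgn d = sgn (nth e0 h (index (lab d) (labels h))).
  move=> d dv.
  have dw : d \in w by rewrite ew mem_cat dv orbT.
  have /andP[_ /hasP [e' e'w /and3P[/eqP le /negbTE oe /eqP se]]] := wfa d dw.
  have e'h : e' \in h.
    move: e'w; rewrite ew mem_cat => /orP[] // e'v.
    have ed : e' = d by apply: (uniq_map_inj uv).
    by rewrite ed eqxx in oe.
  rewrite -le (nth_index_map _ (uniq_map_inj uh)) //.
  by rewrite se; split => //; case: (ovr d) oe; case: (ovr e').
exists (Xm n' h v); split; first exact: vrm_Xm.
exists (Wp n' 0); split; first exact: cp_Xm.
rewrite (rc_Xm hh hv uh uv mhv hvd) -ew.
have szeq : size (labels h) = size (iota 0 N) by rewrite size_iota size_map.
have [f [injf hf]] := inj_ext uh (iota_uniq 0 N) szeq.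
rewrite /gequiv; apply: (rst_trans _ _ _ w); first exact: (gequiv_rot (ltnW hi)).
apply: rst_step.
have -> : map (fun e => (index (lab e) (labels h), ovr e, sgn e)) w =
          map (fun e => (f (lab e), ovr e, sgn e)) w.
  apply/eq_in_map => e ew'.
  have le : lab e \in labels h.
    by move: ew'; rewrite ew mem_cat => /orP[] he; [|rewrite mhv]; apply: map_f.
  have ki : index (lab e) (labels h) < size (labels h) by rewrite index_mem.
  by rewrite -{2}(nth_index 0 le) hf // nth_iota // -hh -(size_map lab).
exact: GM_relabel.
Qed.

Theorem mainTheorem3 (K omega : gcode) (n : nat) :
  gc_wf K -> 0 < n -> crossing_number K n ->
  gc_wf omega -> gequiv omega K -> size omega = n.*2 ->
  Mw omega = n ->
  tile_number K n /\ row_number K n.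
Proof.
move=> wfK; case: n => [|n'] // _ cn wfo eqo szo Mo.
have [X [vX [q [cq eqq]]]] := construct wfo szo Mo.
have rep : represents X K.
  exists q; split => //; rewrite /gequiv.
  apply: (rst_trans _ _ _ omega) => //; exact: rst_sym.
split; split.
- by exists 1, n'.+1, X; split => //; rewrite mul1n.
- by move=> j [a [b [Y [vY rY ->]]]]; exact: lower_bound vY rY cn.
- by exists X.
- by move=> r [Y [vY rY]]; have := lower_bound vY rY cn; rewrite mul1n.
Qed.
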